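(* Let $X$ be a real Banach space, $I=\{1,\ldots,m\}$, $J=\{1,\ldots,l\}$, $f_i,g_j\colon X\to\mathbb{R}$, $M=\{x\in X\mid f_i(x)=0\ \forall i\in I,\ g_j(x)\le0\ \forall j\in J\}$, $\overline{x}\in M$, $J(\overline{x})=\{j\in J\mid g_j(\overline{x})=0\}$, and let $f_i$, $i\in I$, and $g_j$, $j\in J(\overline{x})$, be quasidifferentiable at $\overline{x}$ with given quasidifferentials. Consider the conditions $$[\mathscr{D} f_i(\overline{x})]^+\cap\operatorname{cl}^*\operatorname{lin}\{[\mathscr{D} f_k(\overline{x})]^+\mid k\ne i\}=\emptyset\quad\forall i\in I,\qquad(\mathrm{A})$$ $$\operatorname{co}\{[\mathscr{D} g_j(\overline{x})]^+\mid j\in J(\overline{x})\}\cap\operatorname{cl}^*\operatorname{lin}\{[\mathscr{D} f_i(\overline{x})]^+\mid i\in I\}=\emptyset.\qquad(\mathrm{B})$$ Call ''condition (Q) for given $x_i^*,y_i^*,z_j^*$'' the conjunction of: (1) for any $i\in I$ there exists $v_i\in X$ with $s(\underline{\partial} f_i(\overline{x})+y_i^*,v_i)<0$ and, for all $k\ne i$, $s(\underline{\partial} f_k(\overline{x})+y_k^*,v_i)\le0$ and $s(-x_k^*-\overline{\partial} f_k(\overline{x}),v_i)\le0$; (2) for any $i\in I$ there exists $w_i\in X$ with $s(-x_i^*-\overline{\partial} f_i(\overline{x}),w_i)<0$ and, for all $k\ne i$, $s(-x_k^*-\overline{\partial} f_k(\overline{x}),w_i)\le0$ and $s(\underline{\partial}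 f_k(\overline{x})+y_k^*,w_i)\le0$; (3) there exists $v_0\in X$ with $s(\underline{\partial} g_j(\overline{x})+z_j^*,v_0)<0$ for all $j\in J(\overline{x})$ and $s(\underline{\partial} f_i(\overline{x})+y_i^*,v_0)\le0$, $s(-x_i^*-\overline{\partial} f_i(\overline{x}),v_0)\le0$ for all $i\in I$. Then: (a) if (A) and (B) hold, then condition (Q) holds for all $x_i^*\in\underline{\partial} f_i(\overline{x})$, $y_i^*\in\overline{\partial} f_i(\overline{x})$, $i\in I$, and $z_j^*\in\overline{\partial} g_j(\overline{x})$, $j\in J(\overline{x})$. (b) If the linear spans appearing in (A) and (B) are weak$^*$ closed (in particular, if $X$ is finite dimensional), then conversely, validity of (Q) for all such $x_i^*,y_i^*,z_j^*$ implies (A) and (B). (c) If the span in (A) is weak$^*$ closed for every $i\in I$, then (A) and (B) hold if and only if the Mangasarian–Fromovitz constraint qualification in terms of quasidifferentials holds at $\overline{x}$, i.e. the sets $[\mathscr{D} f_i(\overline{x})]^+$, $i\in I$, are strongly linearly independent and there exists $v_0\in X$ such that $\langle x^*,v_0\rangle=0$ for all $x^*\in[\mathscr{D} f_i(\overline{x})]^+$, $i\in I$, and $\langle x^*,v_0\rangle<0$ for all $x^*\in[\mathscr{D} g_j(\overline{x})]^+$, $j\in J(\overline{x})$.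
   Context: $X^*$ is the dual with pairing $\langle\cdot,\cdot\rangle$; $\operatorname{cl}^*$ is weak$^*$ closure. $f$ is quasidifferentiable at $x$ if the directional derivative $f'(x,v)=\lim_{\alpha\to+0}(f(x+\alpha v)-f(x))/\alpha$ exists finitely for all $v$ and there is a pair $\mathscr{D} f(x)=[\underline{\partial} f(x),\overline{\partial} f(x)]$ of convex weak$^*$ compact subsets of $X^*$ with $f'(x,v)=\max_{x^*\in\underline{\partial} f(x)}\langle x^*,v\rangle+\min_{y^*\in\overline{\partial} f(x)}\langle y^*,v\rangle$ for all $v$; a specific such pair is fixed for each function. The quasidifferential sum is $[\mathscr{D} f(x)]^+=\underline{\partial} f(x)+\overline{\partial} f(x)$ (Minkowski sum). $s(C,v)=\sup_{x^*\in C}\langle x^*,v\rangle$. $\operatorname{lin}$ denotes linear span and $\operatorname{co}$ convex hull of the union of the listed sets. Sets $A_1,\ldots,A_m$ in a real vector space are strongly linearly independent if $A_i\cap\operatorname{lin}\{A_k\mid k\ne i\}=\emptyset$ for all $i$. *)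

(* Defs.v *)
From HB Require Import structures.
From mathcomp Require Import all_boot all_order all_algebra.
From mathcomp Require Import all_classical all_reals all_analysis.
Set Implicit Arguments. Unset Strict Implicit. Unset Printing Implicit Defensive.
Import Order.TTheory GRing.Theory Num.Theory.
Import numFieldNormedType.Exports.
Local Open Scope classical_set_scope.
Local Open Scope ring_scope.

Section QD.
Variables (R : realType) (X : normedModType R).

(* Elements of the dual X^* are represented as functions X -> R that are
   linear and continuous; <x^*, v> is just application x^* v. *)
Definition in_dual (p : X -> R) : Prop :=
  (forall (a : R) (u v : X), p (a *: u + v) = a * p u + p v) /\ continuous p.

(* The weak^* topology on X^* is the subspace topology induced by the
   topology of pointwise convergence {ptws X -> R}. *)
Definition wstar_compact (C : set (X -> R)) : Prop :=
  @compact {ptws X -> R} C.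

Definition wstar_closure (S : set (X -> R)) : set (X -> R) :=
  @closure {ptws X -> R} S `&` in_dual.

Definition convex_set_fun (C : set (X -> R)) : Prop :=
  forall p q, C p -> C q -> forall t : R, 0 <= t <= 1 ->
    C (fun v => t * p v + (1 - t) * q v).

Definition msum (A B : set (X -> R)) : set (X -> R) :=
  [set p | exists a, exists b, [/\ A a, B b & p = (fun v => a v + b v)]].

Definition mtrans (A : set (X -> R)) (y : X -> R) : set (X -> R) :=
  [set p | exists2 a, A a & p = (fun v => a v + y v)].

Definition mneg_trans (x : X -> R) (B : set (X -> R)) : set (X -> R) :=
  [set p | exists2 b, B b & p = (fun v => - x v - b v)].

Definition lin (S : set (X -> R)) : set (X -> R) :=
  [set p | exists n : nat, exists c : 'I_n -> R, exists e : 'I_n -> (X -> R),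
     (forall k, S (e k)) /\ p = (fun v => \sum_(k < n) c k * e k v)].

Definition co (S : set (X -> R)) : set (X -> R) :=
  [set p | exists n : nat, exists c : 'I_n -> R, exists e : 'I_n -> (X -> R),
     [/\ forall k, S (e k), forall k, 0 <= c k, \sum_(k < n) c k = 1
       & p = (fun v => \sum_(k < n) c k * e k v)]].

Definition supp (C : set (X -> R)) (v : X) : \bar R :=
  ereal_sup [set (p v)%:E | p in C].

Definition is_max_at (C : set (X -> R)) (v : X) (r : R) : Prop :=
  (exists2 p, C p & p v = r) /\ (forall p, C p -> p v <= r).
Definition is_min_at (C : set (X -> R)) (v : X) (r : R) : Prop :=
  (exists2 p, C p & p v = r) /\ (forall p, C p -> r <= p v).

Definition dir_deriv (f : X -> R) (x v : X) (d : R) : Prop :=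
  (fun a : R => (f (x + a *: v) - f x) / a) @ 0^'+ --> d.

Definition is_quasidiff (f : X -> R) (x : X) (Dl Du : set (X -> R)) : Prop :=
  [/\ Dl `<=` in_dual /\ Du `<=` in_dual,
      convex_set_fun Dl /\ convex_set_fun Du,
      wstar_compact Dl /\ wstar_compact Du &
      forall v, exists d, dir_deriv f x v d /\
        exists a b, [/\ is_max_at Dl v a, is_min_at Du v b & d = a + b]].

Definition strongly_lin_indep (m : nat) (A : 'I_m -> set (X -> R)) : Prop :=
  forall i, A i `&` lin (\bigcup_(k in [set k | k != i]) A k) = set0.

End QD.

Section Prop2.
Variables (R : realType) (X : normedModType R) (m l : nat).
Variables (Dlf Duf : 'I_m -> set (X -> R)) (Dlg Dug : 'I_l -> set (X -> R)).
Variable (Jact : set 'I_l).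

Definition qsum_f (i : 'I_m) := msum (Dlf i) (Duf i).
Definition qsum_g (j : 'I_l) := msum (Dlg j) (Dug j).

Definition span_A (i : 'I_m) : set (X -> R) :=
  lin (\bigcup_(k in [set k | k != i]) qsum_f k).
Definition span_B : set (X -> R) := lin (\bigcup_(i in setT) qsum_f i).

Definition condA : Prop :=
  forall i, qsum_f i `&` wstar_closure (span_A i) = set0.
Definition condB : Prop :=
  co (\bigcup_(j in Jact) qsum_g j) `&` wstar_closure span_B = set0.

Definition condQ (xs ys : 'I_m -> (X -> R)) (zs : 'I_l -> (X -> R)) : Prop :=
  [/\ (forall i, exists v : X,
         (supp (mtrans (Dlf i) (ys i)) v < 0)%E /\
         forall k, k != i ->
           (supp (mtrans (Dlf k) (ys k)) v <= 0)%E /\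
           (supp (mneg_trans (xs k) (Duf k)) v <= 0)%E),
      (forall i, exists w : X,
         (supp (mneg_trans (xs i) (Duf i)) w < 0)%E /\
         forall k, k != i ->
           (supp (mneg_trans (xs k) (Duf k)) w <= 0)%E /\
           (supp (mtrans (Dlf k) (ys k)) w <= 0)%E) &
      (exists v0 : X,
         (forall j, Jact j -> (supp (mtrans (Dlg j) (zs j)) v0 < 0)%E) /\
         (forall i, (supp (mtrans (Dlf i) (ys i)) v0 <= 0)%E /\
                    (supp (mneg_trans (xs i) (Duf i)) v0 <= 0)%E))].

Definition condQ_all : Prop :=
  forall (xs ys : 'I_m -> (X -> R)) (zs : 'I_l -> (X -> R)),
    (forall i, Dlf i (xs i)) -> (forall i, Duf i (ys i)) ->
    (forall j, Jact j -> Dug j (zs j)) -> condQ xs ys zs.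

Definition MFCQ_qd : Prop :=
  strongly_lin_indep qsum_f /\
  exists v0 : X,
    (forall i p, qsum_f i p -> p v0 = 0) /\
    (forall j p, Jact j -> qsum_g j p -> p v0 < 0).

End Prop2.

(* Main.v *)
Require Import Defs.
From HB Require Import structures.
From mathcomp Require Import all_boot all_order all_algebra.
From mathcomp Require Import all_classical all_reals all_analysis.
From mathcomp Require Import ring lra.
Set Implicit Arguments. Unset Strict Implicit. Unset Printing Implicit Defensive.
Import Order.TTheory GRing.Theory Num.Theory.
Import numFieldNormedType.Exports.
Local Open Scope classical_set_scope.
Local Open Scope ring_scope.

Section Lam.
Variable R : realType.

Lemma lam_lemma (n : nat) (W : set (nat -> R)) :
  W (fun _ => 0) ->
  (forall a w1 w2, W w1 -> W w2 -> W (fun j => a * w1 j + w2 j)) ->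
  forall t, ~ (exists2 w, W w & forall j, (j < n)%N -> w j = t j) ->
  exists lam : nat -> R,
    (forall w, W w -> \sum_(0 <= j < n) lam j * w j = 0) /\
    \sum_(0 <= j < n) lam j * t j != 0.
Proof.
elim: n W => [|n IH] W W0 Wc t Ht.
  by exfalso; apply: Ht; exists (fun _ => 0).
have [[w0 Ww0 w0n]|nw] := pselect (exists2 w0, W w0 & w0 n != 0).
  pose W' := [set w | W w /\ w n = 0].
  pose c := t n / w0 n.
  pose t' := fun j => t j - c * w0 j.
  have W'0 : W' (fun _ => 0) by [].
  have W'c : forall a w1 w2, W' w1 -> W' w2 -> W' (fun j => a * w1 j + w2 j).
    move=> a w1 w2 [Ww1 w1n] [Ww2 w2n]; split; first exact: Wc.
    by rewrite w1n w2n mulr0 addr0.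
  have Ht' : ~ (exists2 w, W' w & forall j, (j < n)%N -> w j = t' j).
    move=> [w [Ww wn] Hw]; apply: Ht.
    exists (fun j => c * w0 j + w j); first exact: Wc.
    move=> j; rewrite ltnS leq_eqVlt => /orP [/eqP ->|jn].
      by rewrite wn addr0 /c mulfVK.
    by rewrite Hw // /t'; ring.
  have [lam' [H1 H2]] := IH W' W'0 W'c t' Ht'.
  pose S := \sum_(0 <= j < n) lam' j * w0 j.
  exists (fun j => if j == n then - S / w0 n else lam' j).
  have E : forall F : nat -> R, \sum_(0 <= j < n.+1)
      (if j == n then - S / w0 n else lam' j) * F j =
      \sum_(0 <= j < n) lam' j * F j + (- S / w0 n) * F n.
    move=> F; rewrite big_nat_recr //= eqxx; congr (_ + _).
    by apply: eq_big_nat => j /andP [_ jn]; rewrite ltn_eqF.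
  have Elin : forall a F G, \sum_(0 <= j < n) lam' j * (a * F j + G j) =
      a * \sum_(0 <= j < n) lam' j * F j + \sum_(0 <= j < n) lam' j * G j.
    move=> a F G; rewrite mulr_sumr -big_split /=.
    by apply: eq_bigr => j _; ring.
  split.
    move=> w Ww; rewrite E.
    have Ww' : W' (fun j => (- (w n / w0 n)) * w0 j + w j).
      split; first exact: Wc.
      by rewrite mulNr divfK // addNr.
    have := H1 _ Ww'; rewrite Elin -/S => h.
    have -> : \sum_(0 <= j < n) lam' j * w j = w n / w0 n * S.
      by move/eqP: h; rewrite addrC addr_eq0 mulNr opprK => /eqP.
    by field.
  rewrite E.
  have := H2; rewrite /t'.
  have -> : \sum_(0 <= j < n) lam' j * (t j - c * w0 j) =
    - c * S + \sum_(0 <= j < n) lam' j * t j.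
    rewrite -Elin; apply: eq_bigr => j _; ring.
  by rewrite /c; congr (_ != _); field.
have nw' : forall w, W w -> w n = 0.
  by move=> w Ww; apply/eqP; apply/negP => /negP h; apply: nw; exists w.
have [tn0|tn] := eqVneq (t n) 0; last first.
  exists (fun j => (j == n)%:R); split.
    move=> w Ww; rewrite big_nat_recr //= eqxx mul1r (nw' w Ww) addr0.
    by apply: big1_seq => j /andP [_]; rewrite mem_index_iota => /andP [_ jn]; rewrite ltn_eqF // mul0r.
  rewrite big_nat_recr //= eqxx mul1r big1_seq ?add0r //.
  by move=> j /andP [_]; rewrite mem_index_iota => /andP [_ jn]; rewrite ltn_eqF // mul0r.
have Ht' : ~ (exists2 w, W w & forall j, (j < n)%N -> w j = t j).
  move=> [w Ww Hw]; apply: Ht; exists w => // j.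
  rewrite ltnS leq_eqVlt => /orP [/eqP ->|jn]; first by rewrite nw' // tn0.
  exact: Hw.
have [lam' [H1 H2]] := IH W W0 Wc t Ht'.
exists lam'; split.
  by move=> w Ww; rewrite big_nat_recr //= (nw' w Ww) mulr0 addr0; exact: H1.
by rewrite big_nat_recr //= tn0 mulr0 addr0.
Qed.

End Lam.


Section Basics.
Variables (R : realType) (X : normedModType R).

Definition islin (p : X -> R) :=
  forall (a : R) (u v : X), p (a *: u + v) = a * p u + p v.
Definition linclosed (L : set (X -> R)) :=
  forall a p q, L p -> L q -> L (fun v => a * p v + q v).

Lemma islin0 (p : X -> R) : islin p -> p 0 = 0.
Proof. by move=> H; have := H 1 0 0; rewrite scale1r addr0 mul1r; lra. Qed.
Lemma islinD (p : X -> R) u v : islin p -> p (u + v) = p u + p v.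
Proof. by move=> H; rewrite -[u]scale1r H mul1r scale1r. Qed.
Lemma islinZ (p : X -> R) a u : islin p -> p (a *: u) = a * p u.
Proof. by move=> H; rewrite -[a *: u]addr0 H (islin0 H) addr0. Qed.
Lemma islinN (p : X -> R) u : islin p -> p (- u) = - p u.
Proof. by move=> H; rewrite -scaleN1r islinZ // mulN1r. Qed.
Lemma islin_sum (p : X -> R) (I : Type) (r : seq I) (P : pred I) (F : I -> X) :
  islin p -> p (\sum_(i <- r | P i) F i) = \sum_(i <- r | P i) p (F i).
Proof.
move=> H; apply: (big_morph p (fun u v => islinD u v H) (islin0 H)).
Qed.

Lemma dual_islin (p : X -> R) : in_dual p -> islin p.
Proof. by case. Qed.

Lemma dual_comb (a b : R) (p q : X -> R) : in_dual p -> in_dual q ->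
  in_dual (fun v => a * p v + b * q v).
Proof.
move=> [Lp Cp] [Lq Cq]; split.
  by move=> c u v /=; rewrite Lp Lq; ring.
move=> x.
apply: (@cvgD _ _ _ _ _ (fun v => a * p v) (fun v => b * q v)).
  by apply: (@cvgM _ _ _ _ (fun _ => a) p); [exact: cvg_cst | exact: Cp].
by apply: (@cvgM _ _ _ _ (fun _ => b) q); [exact: cvg_cst | exact: Cq].
Qed.

Lemma dual_add (p q : X -> R) : in_dual p -> in_dual q -> in_dual (fun v => p v + q v).
Proof.
move=> hp hq; have := dual_comb 1 1 hp hq.
by rewrite (_ : (fun v => 1 * p v + 1 * q v) = (fun v => p v + q v)) //;
  apply: funext => v; rewrite !mul1r.
Qed.

Lemma concat_fam n1 n2 (c1 : 'I_n1 -> R) (e1 : 'I_n1 -> X -> R)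
  (c2 : 'I_n2 -> R) (e2 : 'I_n2 -> X -> R) (a b : R) :
  exists (c : 'I_(n1 + n2) -> R) (e : 'I_(n1 + n2) -> X -> R),
  [/\ forall v, \sum_(k < n1 + n2) c k * e k v =
        a * \sum_(k < n1) c1 k * e1 k v + b * \sum_(k < n2) c2 k * e2 k v,
      \sum_(k < n1 + n2) c k = a * \sum_(k < n1) c1 k + b * \sum_(k < n2) c2 k,
      forall P : (X -> R) -> Prop, (forall k, P (e1 k)) -> (forall k, P (e2 k)) ->
        forall k, P (e k) &
      0 <= a -> 0 <= b -> (forall k, 0 <= c1 k) -> (forall k, 0 <= c2 k) ->
        forall k, 0 <= c k].
Proof.
pose c := fun k : 'I_(n1 + n2) =>
  match fintype.split k with inl k1 => a * c1 k1 | inr k2 => b * c2 k2 end.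
pose e := fun k : 'I_(n1 + n2) =>
  match fintype.split k with inl k1 => e1 k1 | inr k2 => e2 k2 end.
have sl : forall i, fintype.split (lshift n2 i) = inl i := fun i => unsplitK (inl _ i).
have sr : forall i, fintype.split (rshift n1 i) = inr i := fun i => unsplitK (inr _ i).
exists c, e; split.
- move=> v; rewrite big_split_ord /= !mulr_sumr; congr (_ + _).
    by apply: eq_bigr => k _; rewrite /c /e sl mulrA.
  by apply: eq_bigr => k _; rewrite /c /e sr mulrA.
- rewrite big_split_ord /= !mulr_sumr; congr (_ + _).
    by apply: eq_bigr => k _; rewrite /c sl.
  by apply: eq_bigr => k _; rewrite /c sr.
- by move=> P H1 H2 k; rewrite /e; case: (fintype.split k).
- by move=> a0 b0 H1 H2 k; rewrite /c; case: (fintype.split k) => i; apply: mulr_ge0.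
Qed.

Lemma lin0 (S : set (X -> R)) : lin S (fun _ => 0).
Proof.
exists 0%N, (fun _ => 0), (fun _ _ => 0); split; first by case.
by apply: funext => v; rewrite big_ord0.
Qed.

Lemma lin_sub (S : set (X -> R)) p : S p -> lin S p.
Proof.
move=> Sp; exists 1%N, (fun _ => 1), (fun _ => p); split => //.
by apply: funext => v; rewrite big_ord1 mul1r.
Qed.

Lemma lin_comb (S : set (X -> R)) : linclosed (lin S).
Proof.
move=> a p q [n1 [c1 [e1 [H1 ->]]]] [n2 [c2 [e2 [H2 ->]]]].
have [c [e [E1 _ E3 _]]] := concat_fam c1 e1 c2 e2 a 1.
exists (n1 + n2)%N, c, e; split; first exact: E3.
by apply: funext => v; rewrite E1 mul1r.
Qed.

Lemma lin_islin (S : set (X -> R)) : S `<=` islin -> lin S `<=` islin.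
Proof.
move=> HS p [n [c [e [He ->]]]] a u v.
rewrite mulr_sumr -big_split /=; apply: eq_bigr => k _.
by rewrite (HS _ (He k)); ring.
Qed.

Lemma co_sub (S : set (X -> R)) p : S p -> co S p.
Proof.
move=> Sp; exists 1%N, (fun _ => 1), (fun _ => p); split => //.
  by rewrite big_ord1.
by apply: funext => v; rewrite big_ord1 mul1r.
Qed.

Lemma co_comb (S : set (X -> R)) p q t : co S p -> co S q -> 0 <= t <= 1 ->
  co S (fun v => t * p v + (1 - t) * q v).
Proof.
move=> [n1 [c1 [e1 [H1 P1 S1 ->]]]] [n2 [c2 [e2 [H2 P2 S2 ->]]]] /andP [t0 t1].
have [c [e [E1 E2 E3 E4]]] := concat_fam c1 e1 c2 e2 t (1 - t).
exists (n1 + n2)%N, c, e; split.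
- exact: E3.
- by apply: E4; rewrite ?subr_ge0.
- by rewrite E2 S1 S2; ring.
- by apply: funext => v; rewrite E1.
Qed.

End Basics.


Section Closure.
Variables (R : realType) (X : normedModType R).

Lemma fd (L : set (X -> R)) (k : X -> R) : L (fun _ => 0) -> linclosed L ->
  L `<=` @islin R X -> islin k ->
  (forall y, (forall q, L q -> q y = 0) -> k y = 0) ->
  forall s : seq X, exists2 q, L q & forall x, x \in s -> q x = k x.
Proof.
move=> L0 Lc Ll kl Hk s.
pose n := size s.
pose W := [set w : nat -> R | exists2 q, L q & w = fun j => q (nth 0 s j)].
pose t := fun j => k (nth 0 s j).
have W0 : W (fun _ => 0) by exists (fun _ => 0).
have Wc : forall a w1 w2, W w1 -> W w2 -> W (fun j => a * w1 j + w2 j).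
  move=> a w1 w2 [q1 Lq1 ->] [q2 Lq2 ->].
  by exists (fun v => a * q1 v + q2 v) => //; exact: Lc.
have [[w [q Lq ->] Hw]|Ht] :=
  pselect (exists2 w, W w & forall j, (j < n)%N -> w j = t j).
  exists q => // x xs; have := Hw (index x s); rewrite /t (nth_index 0 xs).
  by apply; rewrite index_mem.
have [lam [H1 H2]] := lam_lemma W0 Wc Ht.
pose y := \sum_(0 <= j < n) lam j *: nth 0 s j.
have Yy : forall q, L q -> q y = 0.
  move=> q Lq; rewrite /y islin_sum; last exact: Ll.
  transitivity (\sum_(0 <= j < n) lam j * q (nth 0 s j)).
    by apply: eq_bigr => j _; rewrite islinZ //; exact: Ll.
  exact: (H1 _ (ex_intro2 _ _ q Lq erefl)).
exfalso; move/negP: H2; apply; apply/eqP.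
apply: (@eq_trans _ _ (k y)); last exact: Hk y Yy.
by rewrite /y islin_sum //; apply: eq_bigr => j _; rewrite islinZ.
Qed.

Lemma in_closure (L : set (X -> R)) (k : X -> R) : L (fun _ => 0) ->
  linclosed L -> L `<=` @islin R X -> islin k ->
  (forall y, (forall q, L q -> q y = 0) -> k y = 0) ->
  @closure {ptws X -> R} L k.
Proof.
move=> L0 Lc Ll kl Hk.
rewrite closureEcvg.
pose D := [set i : seq X * R | 0 < i.2].
pose B := fun i : seq X * R => [set q : {ptws X -> R} |
  L q /\ forall x, x \in i.1 -> `|q x - k x| < i.2].
have FB : Filter (filter_from D B).
  apply: filter_from_filter; first by exists ([::], 1); rewrite /D /=.
  move=> i j Di Dj; exists (i.1 ++ j.1, Order.min i.2 j.2).
    by rewrite /D /= lt_min Di Dj.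
  move=> q [Lq Hq]; split; split => // x xi.
    by have := Hq x; rewrite mem_cat xi /= => /(_ isT); rewrite lt_min => /andP [].
  by have := Hq x; rewrite mem_cat xi orbT /= => /(_ isT); rewrite lt_min => /andP [].
have PB : ProperFilter (filter_from D B).
  apply: filter_from_proper => i Di.
  have [q Lq Hq] := fd L0 Lc Ll kl Hk i.1.
  by exists q; split => // x xi; rewrite Hq // subrr normr0.
exists (filter_from D B) => //; split.
  apply/pointwise_cvgP => t.
  apply/cvgrPdist_lt => e e0.
  exists ([:: t], e) => // q [_ Hq] /=; rewrite distrC; apply: Hq.
  by rewrite mem_seq1 eqxx.
move=> P0 HP0; exists ([::], 1); first by rewrite /D /=.
by move=> q [Lq _]; exact: HP0.
Qed.

End Closure.


Section Sep.
Variables (R : realType) (X : normedModType R).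
HB.instance Definition _ := isPointed.Build {ptws X -> R} (fun _ => 0).

Lemma eval_cont (t : X) (x : {ptws X -> R}) :
  (fun g : {ptws X -> R} => g t) @ x --> x t.
Proof.
have : {ptws, nbhs x --> x} by apply: cvg_id.
by move/pointwise_cvgP; apply.
Qed.

Lemma phi_cont (s : seq X) :
  continuous (fun p : {ptws X -> R} => \sum_(y <- s) p y * p y).
Proof.
elim: s => [|a s IH] x.
  rewrite (_ : (fun p : {ptws X -> R} => \sum_(y <- [::]) p y * p y) = fun _ => 0).
    have h0 := @cvg_cst _ (0:R) _ (nbhs x) (nbhs_filter x).
    exact: h0.
  by apply: funext => p; rewrite big_nil.
rewrite (_ : (fun p : {ptws X -> R} => \sum_(y <- a :: s) p y * p y) =
  fun p => p a * p a + \sum_(y <- s) p y * p y); last first.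
  by apply: funext => p; rewrite big_cons.
have h := @eval_cont a x.
have h2 := @cvgM _ _ _ (nbhs_filter x) _ _ _ _ h h.
have h3 := @cvgD _ _ _ _ (nbhs_filter x) _ _ _ _ h2 (IH x).
exact: h3.
Qed.

Lemma sep (K L : set (X -> R)) : @compact {ptws X -> R} K ->
  convex_set_fun K -> K `<=` @islin R X ->
  L (fun _ => 0) -> linclosed L -> L `<=` @islin R X ->
  (forall k, K k -> ~ @closure {ptws X -> R} L k) ->
  exists v, (forall k, K k -> k v <= -1) /\ (forall q, L q -> q v = 0).
Proof.
move=> cK vK lK L0 Lc Ll HKL.
pose Y := [set y : X | forall q, L q -> q y = 0].
have step1 : forall k, K k -> exists2 y, Y y & 1 < `|k y|.
  move=> k Kk.
  have [y0 [Yy0 ky0]] : exists y0, Y y0 /\ k y0 != 0.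
    apply: contrapT => H; apply: (HKL k Kk); apply: in_closure => //.
      exact: lK.
    move=> y Yy; apply/eqP; apply: contrapT => /negP ky; apply: H.
    by exists y; split.
  exists ((2 / k y0) *: y0).
    move=> q Lq; rewrite islinZ; last exact: Ll _ Lq.
    by rewrite (Yy0 _ Lq) mulr0.
  rewrite islinZ; last exact: lK.
  by rewrite divfK // ger0_norm //; lra.
pose f := fun y : X => [set p : {ptws X -> R} | 1 < `|p y|].
have fo : forall y, Y y -> open (f y).
  move=> y _.
  have -> : f y = (fun p : {ptws X -> R} => p y) @^-1`
      ([set r : R | 1 < r] `|` [set r : R | r < -1]).
    apply/seteqP; split => p; rewrite /f /preimage /=.
      by rewrite ltr_normr => /orP [h|h]; [left | right; lra].
    by case => h; rewrite ltr_normr; apply/orP; [left|right]; lra.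
  have ec : continuous (fun p : {ptws X -> R} => p y).
    by move=> x; exact: (@eval_cont y x).
  apply: (proj1 (continuousP _) ec).
  by apply: openU; [exact: open_gt | exact: open_lt].
have cK' := cK.
have {cK} cK : @cover_compact {ptws X -> R} K.
  by rewrite -(@compact_cover {ptws X -> R}).
have [D' D'Y KD'] : finite_subset_cover Y f K.
  apply: cK => //; move=> k Kk; have [y Yy ky] := step1 k Kk; by exists y.
have [K0|K0] := pselect (K !=set0); last first.
  exists 0; split => [k Kk|q Lq]; first by exfalso; apply: K0; exists k.
  exact: islin0 (Ll _ Lq).
pose s := finmap.enum_fset D'.
pose phi := fun p : {ptws X -> R} => \sum_(y <- s) p y * p y.
have [ks Kks ksmin] := @compact_EVT_min {ptws X -> R} R phi K K0 cK' (continuous_subspaceT (@phi_cont s)).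
have Kks' : K ks by move: Kks; rewrite in_setE.
have phi1 : 1 < phi ks.
  have [y /= yD ky] := KD' ks Kks'.
  rewrite /phi (bigD1_seq y) //=; last exact: finmap.fset_uniq.
  have : 0 <= \sum_(i <- s | i != y) ks i * ks i.
    by apply: sumr_ge0 => i _; rewrite -expr2 sqr_ge0.
  have : 1 < ks y * ks y.
    move: ky; rewrite /f /= ltr_normr => /orP [h|h]; nra.
  lra.
have proj : forall k, K k -> phi ks <= \sum_(y <- s) ks y * k y.
  move=> k Kk.
  pose a := \sum_(y <- s) ks y * (k y - ks y).
  pose b := \sum_(y <- s) (k y - ks y) * (k y - ks y).
  have b0 : 0 <= b by apply: sumr_ge0 => i _; rewrite -expr2 sqr_ge0.
  have key : forall t, 0 < t <= 1 -> 0 <= 2 * a + t * b.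
    move=> t /andP [t0 t1].
    have Kt : K (fun v => t * k v + (1 - t) * ks v).
      by apply: vK => //; rewrite t1 ltW.
    have := ksmin _ (mem_set Kt).
    have -> : phi (fun v => t * k v + (1 - t) * ks v) =
        phi ks + t * (2 * a + t * b).
      rewrite /phi /a /b mulrDr !mulr_sumr -!big_split /=.
      by apply: eq_bigr => y _; ring.
    by rewrite lerDl pmulr_rge0.
  have a0 : 0 <= a.
    rewrite leNgt; apply/negP => a0.
    have [hb|hb] := lerP b (- a).
      by have := key 1; rewrite ltr01 lexx => /(_ isT); lra.
    have b0' : 0 < b by lra.
    have t0 : 0 < - a / b by apply: divr_gt0; lra.
    have t1 : - a / b <= 1 by rewrite ler_pdivrMr // mul1r; lra.
    have := key (- a / b); rewrite t0 t1 divfK ?gt_eqF //.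
    by move=> /(_ isT); lra.
  have -> : \sum_(y <- s) ks y * k y = a + phi ks.
    by rewrite /a /phi /= -big_split; apply: eq_bigr => y _ /=; ring.
  lra.
exists (\sum_(y <- s) (- ks y) *: y); split.
  move=> k Kk; rewrite islin_sum; last exact: lK.
  have -> : \sum_(y <- s) k ((- ks y) *: y) = - \sum_(y <- s) ks y * k y.
    rewrite -sumrN; apply: eq_bigr => y _; rewrite islinZ ?mulNr //.
    exact: lK.
  by have := proj k Kk; lra.
move=> q Lq; rewrite islin_sum; last exact: Ll.
apply: big1_seq => y /andP [_ yD].
have := D'Y y yD; rewrite in_setE => Yy.
rewrite islinZ; last exact: Ll _ Lq.
by rewrite (Yy _ Lq) mulr0.
Qed.

End Sep.


Section Sets.
Variables (R : realType) (X : normedModType R).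

Lemma cont_ptws (T : topologicalType) (Phi : T -> {ptws X -> R}) :
  (forall t x, (fun z => Phi z t) @ x --> Phi x t) -> continuous Phi.
Proof. move=> H x; apply/pointwise_cvgP => t; exact: H. Qed.
Lemma fst_c (U V : topologicalType) (z : U * V) :
  (fun w : U * V => w.1) @ z --> z.1.
Proof. exact: cvg_fst. Qed.
Lemma snd_c (U V : topologicalType) (z : U * V) :
  (fun w : U * V => w.2) @ z --> z.2.
Proof. exact: cvg_snd. Qed.

Lemma eval_comp (T : topologicalType) (h : T -> {ptws X -> R}) (x : T) (t : X) :
  h @ x --> h x -> (fun z => h z t) @ x --> h x t.
Proof.
move=> hc; exact: (cvg_comp h (fun g : {ptws X -> R} => g t) hc (@eval_cont R X t (h x))).
Qed.

Lemma mtrans_compact (A : set (X -> R)) (y : X -> R) :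
  @compact {ptws X -> R} A -> @compact {ptws X -> R} (mtrans A y).
Proof.
move=> cA.
pose tau := fun p : {ptws X -> R} => ((fun v => p v + y v) : {ptws X -> R}).
have -> : mtrans A y = tau @` A.
  by apply/seteqP; split => p; [move=> [a Aa ->]; exists a | move=> [a Aa <-]; exists a].
have ct : continuous tau.
  apply: cont_ptws => t x.
  have h1 := @eval_cont R X t x.
  have h2 := @cvg_cst _ (y t) _ (nbhs x) (nbhs_filter x).
  exact: (@cvgD _ _ _ _ (nbhs_filter x) _ _ _ _ h1 h2).
exact: (continuous_compact (continuous_subspaceT ct) cA).
Qed.

Lemma msum_compact (A B : set (X -> R)) :
  @compact {ptws X -> R} A -> @compact {ptws X -> R} B ->
  @compact {ptws X -> R} (Defs.msum A B).
Proof.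
move=> cA cB.
pose sg := fun w : {ptws X -> R} * {ptws X -> R} =>
  ((fun v => w.1 v + w.2 v) : {ptws X -> R}).
have -> : Defs.msum A B = sg @` (A `*` B).
  apply/seteqP; split => p.
    by move=> [a [b [Aa Bb ->]]]; exists (a, b).
  by move=> [[a b] [Aa Bb] <-]; exists a, b.
have ct : continuous sg.
  apply: cont_ptws => t x.
  have h1 := eval_comp (t:=t) (@fst_c {ptws X -> R} {ptws X -> R} x).
  have h2 := eval_comp (t:=t) (@snd_c {ptws X -> R} {ptws X -> R} x).
  exact: (@cvgD _ _ _ _ (nbhs_filter x) _ _ _ _ h1 h2).
exact: (continuous_compact (continuous_subspaceT ct) (compact_setX cA cB)).
Qed.

End Sets.


Section Hull.
Variables (R : realType) (X : normedModType R).

Definition hull2 (A B : set (X -> R)) : set (X -> R) :=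
  [set p | exists t a b, [/\ 0 <= t <= 1, A a, B b &
     p = fun v => t * a v + (1 - t) * b v]].

Lemma hull2_compact (A B : set (X -> R)) :
  @compact {ptws X -> R} A -> @compact {ptws X -> R} B ->
  @compact {ptws X -> R} (hull2 A B).
Proof.
move=> cA cB.
pose Phi := fun w : R * ({ptws X -> R} * {ptws X -> R}) =>
  ((fun v => w.1 * w.2.1 v + (1 - w.1) * w.2.2 v) : {ptws X -> R}).
have -> : hull2 A B = Phi @` (`[(0:R), 1] `*` (A `*` B)).
  apply/seteqP; split => p.
    move=> [t [a [b [t01 Aa Bb ->]]]]; exists (t, (a, b)); last by [].
    split; last by split.
    by rewrite /= in_itv /=.
  move=> [[t [a b]] [t01 [Aa Bb]] <-].
  have t01' : 0 <= t <= 1 by move: t01; rewrite /= in_itv.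
  by exists t, a, b; split.
have ct : continuous Phi.
  apply: cont_ptws => t x.
  have hT := @fst_c R _ x.
  have hA := eval_comp (t:=t) (cvg_comp _ _ (@snd_c R _ x) (@fst_c _ _ x.2)).
  have hB := eval_comp (t:=t) (cvg_comp _ _ (@snd_c R _ x) (@snd_c _ _ x.2)).
  have h1 := @cvg_cst _ (1:R) _ (nbhs x) (nbhs_filter x).
  have h1T := @cvgB _ _ _ _ (nbhs_filter x) _ _ _ _ h1 hT.
  have hM1 := @cvgM _ _ _ (nbhs_filter x) _ _ _ _ hT hA.
  have hM2 := @cvgM _ _ _ (nbhs_filter x) _ _ _ _ h1T hB.
  exact: (@cvgD _ _ _ _ (nbhs_filter x) _ _ _ _ hM1 hM2).
have cAB : @compact ({ptws X -> R} * {ptws X -> R})%type (A `*` B).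
  exact: compact_setX.
have c3 : @compact (R * ({ptws X -> R} * {ptws X -> R}))%type
    (`[(0:R), 1] `*` (A `*` B)).
  have c0 : compact `[(0:R), 1] by apply: segment_compact.
  exact: (compact_setX c0 cAB).
exact: (continuous_compact (continuous_subspaceT ct) c3).
Qed.

Definition mixw (c1 c2 : R) : R := if c1 + c2 != 0 then c1 / (c1 + c2) else 1.

Lemma mix (c1 c2 x1 x2 : R) : 0 <= c1 -> 0 <= c2 ->
  (c1 + c2) * (mixw c1 c2 * x1 + (1 - mixw c1 c2) * x2) = c1 * x1 + c2 * x2.
Proof.
move=> h1 h2; rewrite /mixw; case: ifPn => [ne|]; first by field.
rewrite negbK => /eqP e.
have c10 : c1 = 0 by lra.
have c20 : c2 = 0 by lra.
by rewrite e mul0r c10 c20 !mul0r addr0.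
Qed.

Lemma mixw01 (c1 c2 : R) : 0 <= c1 -> 0 <= c2 -> 0 <= mixw c1 c2 <= 1.
Proof.
move=> h1 h2; rewrite /mixw; case: ifPn => [ne|]; last by rewrite ler01 lexx.
have p : 0 < c1 + c2 by rewrite lt_def ne /=; lra.
apply/andP; split; first by apply: divr_ge0; lra.
by rewrite ler_pdivrMr // mul1r; lra.
Qed.

Lemma hull2_convex (A B : set (X -> R)) :
  convex_set_fun A -> convex_set_fun B -> convex_set_fun (hull2 A B).
Proof.
move=> vA vB p q [t [a [b [/andP [t0 t1] Aa Bb ->]]]]
  [s [a' [b' [/andP [s0 s1] Aa' Bb' ->]]]] l /andP [l0 l1].
pose c1 := l * t; pose c2 := (1 - l) * s.
pose d1 := l * (1 - t); pose d2 := (1 - l) * (1 - s).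
have c10 : 0 <= c1 by apply: mulr_ge0.
have c20 : 0 <= c2 by apply: mulr_ge0; lra.
have d10 : 0 <= d1 by apply: mulr_ge0; lra.
have d20 : 0 <= d2 by apply: mulr_ge0; lra.
exists (c1 + c2), (fun v => mixw c1 c2 * a v + (1 - mixw c1 c2) * a' v),
  (fun v => mixw d1 d2 * b v + (1 - mixw d1 d2) * b' v); split.
- apply/andP; split; first lra.
  by rewrite /c1 /c2; nra.
- by apply: vA => //; exact: mixw01.
- by apply: vB => //; exact: mixw01.
- apply: funext => v.
  have e2 : 1 - (c1 + c2) = d1 + d2 by rewrite /c1 /c2 /d1 /d2; ring.
  rewrite e2 (mix _ _ c10 c20) (mix _ _ d10 d20) /c1 /c2 /d1 /d2; ring.
Qed.

Lemma hull2_dual (A B : set (X -> R)) :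
  A `<=` @in_dual R X -> B `<=` @in_dual R X -> hull2 A B `<=` @in_dual R X.
Proof.
by move=> dA dB p [t [a [b [_ Aa Bb ->]]]]; apply: dual_comb; [exact: dA|exact: dB].
Qed.

Lemma hull2_subl (A B : set (X -> R)) : B !=set0 -> A `<=` hull2 A B.
Proof.
move=> [b0 Bb0] p Ap; exists 1, p, b0; split => //; first by rewrite ler01 lexx.
by apply: funext => v; rewrite subrr mul0r addr0 mul1r.
Qed.

Lemma hull2_subr (A B : set (X -> R)) : A !=set0 -> B `<=` hull2 A B.
Proof.
move=> [a0 Aa0] p Bp; exists 0, a0, p; split => //; first by rewrite lexx ler01.
by apply: funext => v; rewrite subr0 mul0r add0r mul1r.
Qed.

Lemma hull2_sub (A B U : set (X -> R)) : A `<=` U -> B `<=` U ->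
  (forall p q t, U p -> U q -> 0 <= t <= 1 ->
     U (fun v => t * p v + (1 - t) * q v)) ->
  hull2 A B `<=` U.
Proof.
by move=> AU BU Uc p [t [a [b [t01 Aa Bb ->]]]]; apply: Uc => //; [exact: AU|exact: BU].
Qed.

Lemma hull_seq (I : eqType) (C : I -> set (X -> R)) (U : set (X -> R)) :
  (forall p q t, U p -> U q -> 0 <= t <= 1 ->
     U (fun v => t * p v + (1 - t) * q v)) ->
  forall s : seq I, s != [::] ->
  (forall j, j \in s -> [/\ @compact {ptws X -> R} (C j), convex_set_fun (C j),
      C j `<=` @in_dual R X, C j !=set0 & C j `<=` U]) ->
  exists K : set (X -> R), [/\ @compact {ptws X -> R} K, convex_set_fun K,
      K `<=` @in_dual R X, K `<=` U & forall j, j \in s -> C j `<=` K].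
Proof.
move=> Uc; elim => [//|j s IH] _ H.
have [cj vj dj nj uj] := H j (mem_head _ _).
case: s IH H => [|j' s] IH H.
  by exists (C j); split => // j0; rewrite mem_seq1 => /eqP ->.
have [K [cK vK dK uK sK]] : exists K : set (X -> R),
    [/\ @compact {ptws X -> R} K, convex_set_fun K,
      K `<=` @in_dual R X, K `<=` U & forall j0, j0 \in j' :: s -> C j0 `<=` K].
  by apply: IH => // j0 h; apply: H; rewrite in_cons h orbT.
have nK : K !=set0.
  have hj' : j' \in j :: j' :: s by rewrite in_cons mem_head orbT.
  have [_ _ _ [p Cp] _] := H j' hj'.
  by exists p; apply: (sK j' (mem_head _ _)).
exists (hull2 (C j) K); split.
- exact: hull2_compact.
- exact: hull2_convex.
- exact: hull2_dual.
- exact: hull2_sub.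
- move=> j0; rewrite in_cons => /orP [/eqP ->|h]; first exact: hull2_subl.
  exact: subset_trans (sK _ h) (hull2_subr nj).
Qed.

End Hull.


Section Comb.
Variables (R : realType) (X : normedModType R).

Lemma supp_ub (C : set (X -> R)) v p : C p -> ((p v)%:E <= supp C v)%E.
Proof. by move=> Cp; apply: ereal_sup_ubound; exists p. Qed.

Lemma supp_le (C : set (X -> R)) v (r : R) :
  (forall p, C p -> p v <= r) -> (supp C v <= r%:E)%E.
Proof. by move=> H; apply: ge_ereal_sup => _ [p Cp <-]; rewrite lee_fin; exact: H. Qed.

Lemma supp_le_pt (C : set (X -> R)) v p : (supp C v <= 0)%E -> C p -> p v <= 0.
Proof. by move=> H Cp; have := le_trans (supp_ub v Cp) H; rewrite lee_fin. Qed.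

Lemma supp_lt_pt (C : set (X -> R)) v p : (supp C v < 0)%E -> C p -> p v < 0.
Proof. by move=> H Cp; have := le_lt_trans (supp_ub v Cp) H; rewrite lte_fin. Qed.

Lemma conv_n (C : set (X -> R)) : convex_set_fun C ->
  forall n (w : 'I_n -> R) (g : 'I_n -> X -> R),
  (forall t, 0 <= w t) -> \sum_t w t = 1 -> (forall t, C (g t)) ->
  C (fun v => \sum_t w t * g t v).
Proof.
move=> vC; elim => [|n IH] w g w0 w1 gC.
  by move: w1; rewrite big_ord0 => /eqP; rewrite eq_sym oner_eq0.
rewrite (_ : (fun v => \sum_(t < n.+1) w t * g t v) = fun v =>
  \sum_(t < n) w (widen_ord (leqnSn n) t) * g (widen_ord (leqnSn n) t) v
  + w ord_max * g ord_max v); last by apply: funext => v; rewrite big_ord_recr.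
have w1' := w1; rewrite big_ord_recr /= in w1'.
set S := \sum_(i < n) w (widen_ord (leqnSn n) i) in w1'.
have S0 : 0 <= S by apply: sumr_ge0 => i _.
have [Sz|Snz] := eqVneq S 0.
  have wz := psumr_eq0P (P := predT) (F := fun i => w (widen_ord (leqnSn n) i))
    (fun i _ => w0 _) Sz.
  have wm : w ord_max = 1 by lra.
  rewrite (_ : (fun v => _) = g ord_max); first exact: gC.
  apply: funext => v; rewrite big1 ?add0r ?wm ?mul1r // => i _.
  by rewrite wz // mul0r.
have Sp : 0 < S by rewrite lt_def Snz.
pose w' := fun i : 'I_n => w (widen_ord (leqnSn n) i) / S.
have H := IH w' (fun i => g (widen_ord (leqnSn n) i)).
have Cw : C (fun v => \sum_t w' t * g (widen_ord (leqnSn n) t) v).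
  apply: H => [t||t]; first by apply: divr_ge0.
    by rewrite /w' -mulr_suml divff.
  exact: gC.
have wm0 := w0 ord_max.
have S01 : 0 <= S <= 1 by apply/andP; split; lra.
have E : (fun v => \sum_(t < n) w (widen_ord (leqnSn n) t) *
      g (widen_ord (leqnSn n) t) v + w ord_max * g ord_max v) =
    (fun v => S * (\sum_t w' t * g (widen_ord (leqnSn n) t) v) +
      (1 - S) * g ord_max v).
  apply: funext => v; have -> : 1 - S = w ord_max by lra.
  congr (_ + _); rewrite mulr_sumr; apply: eq_bigr => i _; rewrite /w'.
  by field.
rewrite E; exact: (vC _ _ Cw (gC ord_max) S S01).
Qed.

Lemma wavg (C : set (X -> R)) : convex_set_fun C ->
  forall n (c : 'I_n -> R) (P : pred 'I_n) (g : 'I_n -> X -> R),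
  (forall t, 0 <= c t) -> 0 < \sum_(t | P t) c t ->
  (forall t, P t -> C (g t)) ->
  exists2 x, C x & forall v,
    (\sum_(t | P t) c t) * x v = \sum_(t | P t) c t * g t v.
Proof.
move=> vC n c P g c0 W0 gC.
set W := \sum_(t | P t) c t in W0 *.
have [t1 Pt1] : exists t1, P t1.
  apply: contrapT => H; move: W0; rewrite /W big_pred0 ?ltxx // => t.
  by apply/negP => Pt; apply: H; exists t.
pose w := fun t => (P t)%:R * c t / W.
pose g' := fun t => if P t then g t else g t1.
have Cx : C (fun v => \sum_t w t * g' t v).
  apply: conv_n => //.
  - by move=> t; rewrite /w; apply: divr_ge0; [apply: mulr_ge0|apply: ltW].
  - rewrite /w -mulr_suml.
    have -> : \sum_t (P t)%:R * c t = W.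
      by rewrite /W [RHS]big_mkcond /=; apply: eq_bigr => t _; case: (P t); rewrite ?mul1r ?mul0r.
    by rewrite divff // gt_eqF.
  - by move=> t; rewrite /g'; case: ifP => Pt; apply: gC.
exists (fun v => \sum_t w t * g' t v) => // v.
rewrite /= mulr_sumr [RHS]big_mkcond /=; apply: eq_bigr => t _.
rewrite /w /g'; case: (P t) => /=; last by rewrite !mul0r mulr0.
by field; rewrite gt_eqF.
Qed.

Lemma avg_ex (C : set (X -> R)) : convex_set_fun C -> C !=set0 ->
  forall n (P : pred 'I_n) (g : 'I_n -> X -> R),
  (forall t, P t -> C (g t)) ->
  exists2 x, C x & forall v,
    ((forall t, P t -> g t v <= x v) -> forall t, P t -> g t v = x v) /\
    ((forall t, P t -> x v <= g t v) -> forall t, P t -> g t v = x v).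
Proof.
move=> vC [x0 Cx0] n P g gC.
have [[t1 Pt1]|nP] := pselect (exists t, P t); last first.
  by exists x0 => // v; split => _ t Pt; exfalso; apply: nP; exists t.
have W0 : 0 < \sum_(t | P t) (1:R).
  rewrite (bigD1 t1) //=; apply: (@lt_le_trans _ _ 1) => //.
  by rewrite lerDl; apply: sumr_ge0.
have [x Cx Hx] := @wavg C vC n (fun _ => 1) P g (fun _ => ler01) W0 gC.
exists x => // v.
have E : \sum_(t | P t) (x v - g t v) = 0.
  rewrite sumrB; have := Hx v; rewrite mulr_suml.
  under eq_bigr do rewrite mul1r.
  under [X in _ = X -> _]eq_bigr do rewrite mul1r.
  by move=> ->; rewrite subrr.
split => H t Pt.
  have nn : forall i, P i -> 0 <= x v - g i v.
    by move=> i Pi; rewrite subr_ge0; exact: H.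
  by have := psumr_eq0P nn E Pt => /= h; lra.
have E' : \sum_(t | P t) (g t v - x v) = 0.
  by rewrite -[LHS]opprK -sumrN; under eq_bigr do rewrite opprB; rewrite E oppr0.
have nn : forall i, P i -> 0 <= g i v - x v.
  by move=> i Pi; rewrite subr_ge0; exact: H.
by have := psumr_eq0P nn E' Pt => /= h; lra.
Qed.

Lemma neg_comb n (c f : 'I_n -> R) : (forall t, 0 <= c t) ->
  \sum_t c t = 1 -> (forall t, f t < 0) -> \sum_t c t * f t < 0.
Proof.
move=> c0 c1 f0.
have [t0 ct0] : exists t0, 0 < c t0.
  apply: contrapT => H.
  have cz : forall t, c t = 0.
    move=> t; have := c0 t; rewrite le_eqVlt => /orP [/eqP <-//|h].
    by exfalso; apply: H; exists t.
  by move: c1; rewrite big1 // => /eqP; rewrite eq_sym oner_eq0.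
rewrite (bigD1 t0) //=.
have h1 : c t0 * f t0 < 0 by rewrite pmulr_rlt0.
have h2 : \sum_(i | i != t0) c i * f i <= 0.
  by apply: sumr_le0 => i _; apply: mulr_ge0_le0 => //; apply: ltW.
lra.
Qed.

Lemma regroup (n l : nat) (jj : 'I_n -> 'I_l) (c F : 'I_n -> R) (G : 'I_l -> R) :
  (forall j, \sum_(t | jj t == j) c t * F t = \sum_(t | jj t == j) c t * G j) ->
  \sum_t c t * F t = \sum_t c t * G (jj t).
Proof.
move=> H.
rewrite (partition_big jj predT) //= [RHS](partition_big jj predT) //=.
apply: eq_bigr => j _; rewrite H; apply: eq_bigr => t /eqP -> //.
Qed.

End Comb.


Section Fside.
Variables (R : realType) (X : normedModType R).

Lemma fside_avg (m : nat) (Dl Du : 'I_m -> set (X -> R)) :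
  (forall k, convex_set_fun (Dl k)) -> (forall k, convex_set_fun (Du k)) ->
  (forall k, Dl k !=set0) -> (forall k, Du k !=set0) ->
  forall n (kk : 'I_n -> 'I_m) (al be : 'I_n -> X -> R),
  (forall t, Dl (kk t) (al t)) -> (forall t, Du (kk t) (be t)) ->
  exists xs ys : 'I_m -> X -> R,
  [/\ forall k, Dl k (xs k), forall k, Du k (ys k) &
    forall v, (forall t, (forall a, Dl (kk t) a -> a v + ys (kk t) v <= 0) /\
                         (forall b, Du (kk t) b -> - xs (kk t) v - b v <= 0)) ->
    forall t, al t v + be t v = 0].
Proof.
move=> vl vu nl nu n kk al be Hal Hbe.
have exx : forall k, exists x, Dl k x /\ forall v,
    ((forall t, kk t == k -> al t v <= x v) -> forall t, kk t == k -> al t v = x v).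
  move=> k.
  have Pk : forall t, kk t == k -> Dl k (al t) by move=> t /eqP <-; exact: Hal.
  have [x Dx Hx] := avg_ex (vl k) (nl k) Pk.
  by exists x; split => // v; exact: (Hx v).1.
have eyy : forall k, exists y, Du k y /\ forall v,
    ((forall t, kk t == k -> y v <= be t v) -> forall t, kk t == k -> be t v = y v).
  move=> k.
  have Pk : forall t, kk t == k -> Du k (be t) by move=> t /eqP <-; exact: Hbe.
  have [y Dy Hy] := avg_ex (vu k) (nu k) Pk.
  by exists y; split => // v; exact: (Hy v).2.
have [xs Hxs] := fin_all_exists exx.
have [ys Hys] := fin_all_exists eyy.
exists xs, ys; split; [by move=> k; case: (Hxs k) | by move=> k; case: (Hys k)|].
move=> v H t0.
have [H1 H2] := H t0.
have e0 : xs (kk t0) v + ys (kk t0) v = 0.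
  have := H1 _ (Hxs (kk t0)).1; have := H2 _ (Hys (kk t0)).1; lra.
have ea : al t0 v = xs (kk t0) v.
  apply: ((Hxs (kk t0)).2 v) => // t /eqP kt.
  have [h1 _] := H t; have := h1 _ (Hal t); rewrite kt; lra.
have eb : be t0 v = ys (kk t0) v.
  apply: ((Hys (kk t0)).2 v) => // t /eqP kt.
  have [_ h2] := H t; have := h2 _ (Hbe t); rewrite kt; lra.
lra.
Qed.

Lemma mtrans_convex (A : set (X -> R)) (y : X -> R) :
  convex_set_fun A -> convex_set_fun (mtrans A y).
Proof.
move=> vA p q [a Aa ->] [b Bb ->] t t01.
exists (fun v => t * a v + (1 - t) * b v); first exact: vA.
by apply: funext => v; ring.
Qed.

Lemma mtrans_dual (A : set (X -> R)) (y : X -> R) :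
  A `<=` @in_dual R X -> in_dual y -> mtrans A y `<=` @in_dual R X.
Proof. by move=> dA dy p [a Aa ->]; apply: dual_add => //; exact: dA. Qed.

End Fside.


Section Main.
Variables (R : realType) (X : normedModType R) (m l : nat).
Variables (Dlf Duf : 'I_m -> set (X -> R)) (Dlg Dug : 'I_l -> set (X -> R)).
Variable Jact : set 'I_l.

Definition goodQD (A B : set (X -> R)) :=
  [/\ A `<=` @in_dual R X /\ B `<=` @in_dual R X,
      convex_set_fun A /\ convex_set_fun B,
      @compact {ptws X -> R} A /\ @compact {ptws X -> R} B &
      A !=set0 /\ B !=set0].

Hypothesis Hf : forall i, goodQD (Dlf i) (Duf i).
Hypothesis Hg : forall j, Jact j -> goodQD (Dlg j) (Dug j).

Let dlf i : Dlf i `<=` @in_dual R X. Proof. by case: (Hf i) => [[]]. Qed.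
Let duf i : Duf i `<=` @in_dual R X. Proof. by case: (Hf i) => [[]]. Qed.

Lemma qsf_dual i : qsum_f Dlf Duf i `<=` @in_dual R X.
Proof. by move=> p [a [b [Aa Bb ->]]]; apply: dual_add; [exact: dlf Aa|exact: duf Bb]. Qed.

Lemma qsg_dual j : Jact j -> qsum_g Dlg Dug j `<=` @in_dual R X.
Proof.
move=> Jj p [a [b [Aa Bb ->]]]; have [[d1 d2] _ _ _] := Hg Jj.
by apply: dual_add; [exact: d1 | exact: d2].
Qed.

Lemma inA i k p : k != i -> qsum_f Dlf Duf k p -> span_A Dlf Duf i p.
Proof. by move=> ki qp; apply: lin_sub; exists k. Qed.

Lemma inB i p : qsum_f Dlf Duf i p -> span_B Dlf Duf p.
Proof. by move=> qp; apply: lin_sub; exists i. Qed.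

Lemma spanA_lin i : span_A Dlf Duf i `<=` @islin R X.
Proof.
apply: lin_islin => p [k _ qp]; apply: dual_islin; exact: qsf_dual qp.
Qed.

Lemma spanB_lin : span_B Dlf Duf `<=` @islin R X.
Proof.
apply: lin_islin => p [k _ qp]; apply: dual_islin; exact: qsf_dual qp.
Qed.

Lemma fzero (L : set (X -> R)) (xs ys : 'I_m -> X -> R) k v :
  (forall p, qsum_f Dlf Duf k p -> L p) -> (forall q, L q -> q v = 0) ->
  Dlf k (xs k) -> Duf k (ys k) ->
  (supp (mtrans (Dlf k) (ys k)) v <= 0)%E /\
  (supp (mneg_trans (xs k) (Duf k)) v <= 0)%E.
Proof.
move=> HL Hv xk yk; split; apply: supp_le => p.
  move=> [a Aa ->] /=.
  have : L (fun v => a v + ys k v) by apply: HL; exists a, (ys k).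
  by move/Hv => /= ->.
move=> [b Bb ->] /=.
have : L (fun v => xs k v + b v) by apply: HL; exists (xs k), b.
by move/Hv => /= h; lra.
Qed.

Lemma negv_zero (L : set (X -> R)) v : L `<=` @islin R X ->
  (forall q, L q -> q v = 0) -> forall q, L q -> q (- v) = 0.
Proof. by move=> Ll H q Lq; rewrite islinN ?H ?oppr0 //; exact: Ll. Qed.

Lemma partA : condA Dlf Duf -> condB Dlf Duf Dlg Dug Jact ->
  condQ_all Dlf Duf Dlg Dug Jact.
Proof.
move=> HA HB xs ys zs Hxs Hys Hzs.
have ltm10 : ((-1 : R)%:E < 0)%E by rewrite lte_fin ltrN10.
split.
- move=> i.
  have [v [Kv Lv]] : exists v,
      (forall k, mtrans (Dlf i) (ys i) k -> k v <= -1) /\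
      (forall q, span_A Dlf Duf i q -> q v = 0).
    apply: sep.
    + by apply: mtrans_compact; case: (Hf i) => _ _ [].
    + by apply: mtrans_convex; case: (Hf i) => _ [].
    + move=> p Kp; apply: dual_islin.
      exact: (mtrans_dual (dlf (i:=i)) (duf (Hys i))) Kp.
    + exact: lin0.
    + exact: lin_comb.
    + exact: spanA_lin.
    + move=> k Kk ck.
      have : (qsum_f Dlf Duf i `&` wstar_closure (span_A Dlf Duf i)) k.
        split; first by case: Kk => a Aa ->; exists a, (ys i).
        by split => //; exact: (mtrans_dual (dlf (i:=i)) (duf (Hys i))) Kk.
      by rewrite (HA i).
  exists v; split.
    by apply: (le_lt_trans (supp_le (r := -1) Kv)).
  move=> k ki; apply: (fzero (L := span_A Dlf Duf i)) => //.
  by move=> p; exact: inA ki.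
- move=> i.
  have [v [Kv Lv]] : exists v,
      (forall k, mtrans (Duf i) (xs i) k -> k v <= -1) /\
      (forall q, span_A Dlf Duf i q -> q v = 0).
    apply: sep.
    + by apply: mtrans_compact; case: (Hf i) => _ _ [].
    + by apply: mtrans_convex; case: (Hf i) => _ [].
    + move=> p Kp; apply: dual_islin.
      exact: (mtrans_dual (duf (i:=i)) (dlf (Hxs i))) Kp.
    + exact: lin0.
    + exact: lin_comb.
    + exact: spanA_lin.
    + move=> k Kk ck.
      have : (qsum_f Dlf Duf i `&` wstar_closure (span_A Dlf Duf i)) k.
        split.
          case: Kk => b Bb ->; exists (xs i), b; split => //.
          by apply: funext => w; rewrite addrC.
        by split => //; exact: (mtrans_dual (duf (i:=i)) (dlf (Hxs i))) Kk.
      by rewrite (HA i).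
  exists (- v); split.
    apply: (le_lt_trans _ ltm10); apply: supp_le => p [b Bb ->] /=.
    have xl := dual_islin (dlf (Hxs i)).
    have bl := dual_islin (duf Bb).
    rewrite (islinN _ xl) (islinN _ bl).
    have := Kv (fun w => b w + xs i w); rewrite /=; move=> /(_ (ex_intro2 _ _ b Bb erefl)).
    lra.
  move=> k ki.
  suff [h1 h2] : and (supp (mtrans (Dlf k) (ys k)) (- v)%R <= 0)%E
    (supp (mneg_trans (xs k) (Duf k)) (- v)%R <= 0)%E by split.
  apply: (fzero (L := span_A Dlf Duf i)) => //.
    by move=> p; exact: inA ki.
  exact: negv_zero (@spanA_lin i) Lv.
- have [[j0 Jj0]|nJ] := pselect (exists j, Jact j); last first.
    exists 0; split => [j Jj|i]; first by exfalso; apply: nJ; exists j.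
    apply: (fzero (L := @in_dual R X)) => //.
      exact: qsf_dual.
    by move=> q dq; apply: islin0; exact: dual_islin.
  pose s := [seq j <- enum 'I_l | `[< Jact j >]].
  have ms : forall j, (j \in s) = `[< Jact j >].
    by move=> j; rewrite mem_filter mem_enum andbT.
  have sn : s != [::].
    apply/eqP => s0; have := ms j0; rewrite s0 in_nil => /esym/asboolP.
    by move=> /(_ Jj0).
  pose U := co (\bigcup_(j in Jact) qsum_g Dlg Dug j) `&` @in_dual R X.
  have Uc : forall p q t, U p -> U q -> 0 <= t <= 1 ->
      U (fun v => t * p v + (1 - t) * q v).
    move=> p q t [cp dp] [cq dq] t01; split; first exact: co_comb.
    exact: dual_comb.
  have Hs : forall j, j \in s -> [/\ @compact {ptws X -> R} (mtrans (Dlg j) (zs j)),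
      convex_set_fun (mtrans (Dlg j) (zs j)),
      mtrans (Dlg j) (zs j) `<=` @in_dual R X, mtrans (Dlg j) (zs j) !=set0 &
      mtrans (Dlg j) (zs j) `<=` U].
    move=> j; rewrite ms => /asboolP Jj.
    have [[d1 d2] [v1 v2] [c1 c2] [[a Aa] n2]] := Hg Jj; split.
    - exact: mtrans_compact.
    - exact: mtrans_convex.
    - exact: (mtrans_dual d1 (d2 _ (Hzs j Jj))).
    - by exists (fun v => a v + zs j v), a.
    - move=> p [a' Aa' ->]; split.
        by apply: co_sub; exists j => //; exists a', (zs j); split => //; exact: Hzs.
      exact: (mtrans_dual d1 (d2 _ (Hzs j Jj))) (ex_intro2 _ _ a' Aa' erefl).
  have [K [cK vK dK uK sK]] :=
    @hull_seq R X _ (fun j => mtrans (Dlg j) (zs j)) U Uc s sn Hs.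
  have [v0 [Kv Lv]] : exists v,
      (forall k, K k -> k v <= -1) /\ (forall q, span_B Dlf Duf q -> q v = 0).
    apply: sep => //.
    + by move=> p Kp; apply: dual_islin; exact: dK.
    + exact: lin0.
    + exact: lin_comb.
    + exact: spanB_lin.
    + move=> k Kk ck; have [ck' dk'] := uK k Kk.
      have : (co (\bigcup_(j in Jact) qsum_g Dlg Dug j) `&`
          wstar_closure (span_B Dlf Duf)) k by [].
      by rewrite HB.
  exists v0; split.
    move=> j Jj; apply: (le_lt_trans _ ltm10); apply: supp_le => p Cp.
    by apply: Kv; apply: (sK j) => //; rewrite ms; apply/asboolP.
  move=> i; apply: (fzero (L := span_B Dlf Duf)) => //.
  by move=> p; exact: inB.
Qed.

End Main.


Section Main2.
Variables (R : realType) (X : normedModType R) (m l : nat).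
Variables (Dlf Duf : 'I_m -> set (X -> R)) (Dlg Dug : 'I_l -> set (X -> R)).
Variable Jact : set 'I_l.
Hypothesis Hf : forall i, goodQD (Dlf i) (Duf i).
Hypothesis Hg : forall j, Jact j -> goodQD (Dlg j) (Dug j).

Lemma msum_convex (A B : set (X -> R)) :
  convex_set_fun A -> convex_set_fun B -> convex_set_fun (Defs.msum A B).
Proof.
move=> vA vB p q [a [b [Aa Bb ->]]] [a' [b' [Aa' Bb' ->]]] t t01.
exists (fun v => t * a v + (1 - t) * a' v), (fun v => t * b v + (1 - t) * b' v).
by split; [exact: vA | exact: vB | apply: funext => v; ring].
Qed.

Lemma Zclosed (v0 : X) : @closed {ptws X -> R} [set q | q v0 = 0].
Proof.
have ec : continuous (fun p : {ptws X -> R} => p v0).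
  by move=> x; exact: (@eval_cont R X v0 x).
have := (proj1 (continuous_closedP _) ec) _ (@closed_eq R 0).
by congr closed.
Qed.

Lemma partC : (forall i, wstar_closure (span_A Dlf Duf i) = span_A Dlf Duf i) ->
  (condA Dlf Duf /\ condB Dlf Duf Dlg Dug Jact <-> MFCQ_qd Dlf Duf Dlg Dug Jact).
Proof.
move=> Hcl; split.
- move=> [HA HB]; split.
    by move=> i; have := HA i; rewrite Hcl.
  have [[j0 Jj0]|nJ] := pselect (exists j, Jact j); last first.
    exists 0; split => [i p qp|j p Jj]; last by exfalso; apply: nJ; exists j.
    by apply: islin0; apply: dual_islin; exact: (qsf_dual Hf qp).
  pose s := [seq j <- enum 'I_l | `[< Jact j >]].
  have ms : forall j, (j \in s) = `[< Jact j >].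
    by move=> j; rewrite mem_filter mem_enum andbT.
  have sn : s != [::].
    apply/eqP => s0; have := ms j0; rewrite s0 in_nil => /esym/asboolP.
    by move=> /(_ Jj0).
  pose U := co (\bigcup_(j in Jact) qsum_g Dlg Dug j) `&` @in_dual R X.
  have Uc : forall p q t, U p -> U q -> 0 <= t <= 1 ->
      U (fun v => t * p v + (1 - t) * q v).
    move=> p q t [cp dp] [cq dq] t01; split; first exact: co_comb.
    exact: dual_comb.
  have Hs : forall j, j \in s -> [/\ @compact {ptws X -> R} (qsum_g Dlg Dug j),
      convex_set_fun (qsum_g Dlg Dug j),
      qsum_g Dlg Dug j `<=` @in_dual R X, qsum_g Dlg Dug j !=set0 &
      qsum_g Dlg Dug j `<=` U].
    move=> j; rewrite ms => /asboolP Jj.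
    have [[d1 d2] [v1 v2] [c1 c2] [[a Aa] [b Bb]]] := Hg Jj; split.
    - exact: msum_compact.
    - exact: msum_convex.
    - exact: (qsg_dual Hg Jj).
    - by exists (fun v => a v + b v), a, b.
    - move=> p qp; split; first by apply: co_sub; exists j.
      exact: (qsg_dual Hg Jj).
  have [K [cK vK dK uK sK]] :=
    @hull_seq R X _ (fun j => qsum_g Dlg Dug j) U Uc s sn Hs.
  have [v0 [Kv Lv]] : exists v,
      (forall k, K k -> k v <= -1) /\ (forall q, span_B Dlf Duf q -> q v = 0).
    apply: sep => //.
    + by move=> p Kp; apply: dual_islin; exact: dK.
    + exact: lin0.
    + exact: lin_comb.
    + exact: (spanB_lin Hf).
    + move=> k Kk ck; have [ck' dk'] := uK k Kk.
      have : (co (\bigcup_(j in Jact) qsum_g Dlg Dug j) `&`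
          wstar_closure (span_B Dlf Duf)) k by [].
      by rewrite HB.
  exists v0; split.
    by move=> i p qp; apply: Lv; exact: inB qp.
  move=> j p Jj qp.
  have : p v0 <= -1 by apply: Kv; apply: (sK j) => //; rewrite ms; apply/asboolP.
  lra.
- move=> [SLI [v0 [Hf0 Hg0]]]; split.
    by move=> i; rewrite Hcl; exact: SLI i.
  rewrite /condB -subset0 => p [[n [c [e [He c0 c1 pe]]]] [clp dp]].
  have pv0 : p v0 = 0.
    have sZ : span_B Dlf Duf `<=` [set q | q v0 = 0].
      move=> q [n' [c' [e' [He' ->]]]] /=.
      by apply: big1 => k _; have [i _ qi] := He' k; rewrite (Hf0 i _ qi) mulr0.
    have := @closureS {ptws X -> R} _ _ sZ p clp.
    by rewrite -(proj1 (closure_id _) (Zclosed (v0:=v0))).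
  have : p v0 < 0.
    rewrite pe; apply: neg_comb => // t.
    by have [j Jj qj] := He t; exact: Hg0 Jj qj.
  lra.
Qed.

End Main2.


Section Main3.
Variables (R : realType) (X : normedModType R) (m l : nat).
Variables (Dlf Duf : 'I_m -> set (X -> R)) (Dlg Dug : 'I_l -> set (X -> R)).
Variable Jact : set 'I_l.
Hypothesis Hf : forall i, goodQD (Dlf i) (Duf i).
Hypothesis Hg : forall j, Jact j -> goodQD (Dlg j) (Dug j).

Let vl k : convex_set_fun (Dlf k). Proof. by case: (Hf k) => _ []. Qed.
Let vu k : convex_set_fun (Duf k). Proof. by case: (Hf k) => _ []. Qed.
Let nl k : Dlf k !=set0. Proof. by case: (Hf k) => _ _ _ []. Qed.
Let nu k : Duf k !=set0. Proof. by case: (Hf k) => _ _ _ []. Qed.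

Lemma zex : exists zs0 : 'I_l -> X -> R, forall j, Jact j -> Dug j (zs0 j).
Proof.
have H : forall j, exists z : X -> R, Jact j -> Dug j z.
  move=> j; have [Jj|nJj] := pselect (Jact j); last by exists (fun _ => 0).
  by have [_ _ _ [_ [z Dz]]] := Hg Jj; exists z.
have [zs Hz] := fin_all_exists H.
by exists zs.
Qed.

Lemma partB_A : (forall i, wstar_closure (span_A Dlf Duf i) = span_A Dlf Duf i) ->
  condQ_all Dlf Duf Dlg Dug Jact -> condA Dlf Duf.
Proof.
move=> Hcl HQ i; rewrite Hcl -subset0.
move=> p [[a [b [Aa Bb pab]]] [n [c [e [He pe]]]]].
have ex : forall t, exists w : 'I_m * ((X -> R) * (X -> R)),
    [/\ w.1 != i, Dlf w.1 w.2.1, Duf w.1 w.2.2 &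
      e t = fun v => w.2.1 v + w.2.2 v].
  move=> t; have [k ki [al [be [A B E]]]] := He t.
  by exists (k, (al, be)).
have [W HW] := fin_all_exists ex.
pose kk := fun t => (W t).1.
pose al := fun t => (W t).2.1.
pose be := fun t => (W t).2.2.
have Hal : forall t, Dlf (kk t) (al t) by move=> t; case: (HW t).
have Hbe : forall t, Duf (kk t) (be t) by move=> t; case: (HW t).
have [xs [ys [Hxs Hys Hfs]]] := fside_avg vl vu nl nu Hal Hbe.
pose xs' := fun k => if k == i then a else xs k.
pose ys' := fun k => if k == i then b else ys k.
have Hxs' : forall k, Dlf k (xs' k).
  by move=> k; rewrite /xs'; case: eqP => [->|]. 
have Hys' : forall k, Duf k (ys' k).
  by move=> k; rewrite /ys'; case: eqP => [->|].
have [zs0 Hz] := zex.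
have [Q1 _ _] := HQ xs' ys' zs0 Hxs' Hys' Hz.
have [v [Hvi Hvk]] := Q1 i.
have pv : a v + b v < 0.
  have := supp_lt_pt (p := fun v => a v + ys' i v) Hvi.
  by rewrite /ys' eqxx; apply; exists a.
have e0 : forall t, al t v + be t v = 0.
  apply: Hfs => t.
  have kt : kk t != i by case: (HW t).
  have [h1 h2] := Hvk (kk t) kt.
  have xe : xs' (kk t) = xs (kk t) by rewrite /xs' (negbTE kt).
  have ye : ys' (kk t) = ys (kk t) by rewrite /ys' (negbTE kt).
  rewrite xe ye in h1 h2; split.
    move=> a' Aa'; have := supp_le_pt (p := fun v => a' v + ys (kk t) v) h1.
    by apply; exists a'.
  move=> b' Bb'; have := supp_le_pt (p := fun v => - xs (kk t) v - b' v) h2.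
  by apply; exists b'.
have : a v + b v = 0.
  have -> : a v + b v = p v by rewrite pab.
  rewrite pe; apply: big1 => t _.
  by case: (HW t) => _ _ _ ->; rewrite e0 mulr0.
lra.
Qed.

Lemma partB_B : wstar_closure (span_B Dlf Duf) = span_B Dlf Duf ->
  condQ_all Dlf Duf Dlg Dug Jact -> condB Dlf Duf Dlg Dug Jact.
Proof.
move=> HclB HQ; rewrite /condB HclB -subset0.
move=> p [[n [c [e [He c0 c1 pe]]]] [n' [d [f' [Hf' pe']]]]].
have exg : forall t, exists w : 'I_l * ((X -> R) * (X -> R)),
    [/\ Jact w.1, Dlg w.1 w.2.1, Dug w.1 w.2.2 &
      e t = fun v => w.2.1 v + w.2.2 v].
  move=> t; have [j Jj [al [be [A B E]]]] := He t.
  by exists (j, (al, be)).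
have [Wg HWg] := fin_all_exists exg.
pose jj := fun t => (Wg t).1.
pose alg := fun t => (Wg t).2.1.
pose beg := fun t => (Wg t).2.2.
have exf : forall s, exists w : 'I_m * ((X -> R) * (X -> R)),
    [/\ Dlf w.1 w.2.1, Duf w.1 w.2.2 & f' s = fun v => w.2.1 v + w.2.2 v].
  move=> s; have [k _ [al [be [A B E]]]] := Hf' s.
  by exists (k, (al, be)).
have [Wf HWf] := fin_all_exists exf.
pose kk := fun s => (Wf s).1.
pose al := fun s => (Wf s).2.1.
pose be := fun s => (Wf s).2.2.
have Hal : forall s, Dlf (kk s) (al s) by move=> s; case: (HWf s).
have Hbe : forall s, Duf (kk s) (be s) by move=> s; case: (HWf s).
have [xs [ys [Hxs Hys Hfs]]] := fside_avg vl vu nl nu Hal Hbe.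
have exz : forall j, exists z : X -> R, (Jact j -> Dug j z) /\ forall v,
    \sum_(t | jj t == j) c t * beg t v = \sum_(t | jj t == j) c t * z v.
  move=> j.
  have W0 : 0 <= \sum_(t | jj t == j) c t by apply: sumr_ge0.
  have [Wz|Wp] := eqVneq (\sum_(t | jj t == j) c t) 0.
    have cz := psumr_eq0P (fun t _ => c0 t) Wz.
    have z0 : forall F : 'I_n -> R, \sum_(t | jj t == j) c t * F t = 0.
      by move=> F; apply: big1 => t /cz ->; rewrite mul0r.
    have [Jj|nJj] := pselect (Jact j).
      have [_ _ _ [_ [z Dz]]] := Hg Jj.
      by exists z; split => // v; rewrite !z0.
    by exists (fun _ => 0); split => [/nJj|v] //; rewrite !z0.
  have Wpos : 0 < \sum_(t | jj t == j) c t by rewrite lt_def Wp W0.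
  have [t1 Pt1] : exists t1, jj t1 == j.
    apply: contrapT => H; move: Wpos; rewrite big_pred0 ?ltxx // => t.
    by apply/negP => Pt; apply: H; exists t.
  have Jj : Jact j.
    by case: (HWg t1) => J _ _ _; move: J; rewrite -/(jj t1) (eqP Pt1).
  have [_ [_ vDug] _ _] := Hg Jj.
  have gC : forall t, jj t == j -> Dug j (beg t).
    by move=> t /eqP <-; case: (HWg t).
  have [z Dz Hz] := wavg vDug c0 Wpos gC.
  by exists z; split => // v; rewrite -mulr_suml Hz.
have [zs Hzs] := fin_all_exists exz.
have Hzs' : forall j, Jact j -> Dug j (zs j) by move=> j; case: (Hzs j).
have [_ _ [v0 [Hj Hi]]] := HQ xs ys zs Hxs Hys Hzs'.
have e0 : forall s, al s v0 + be s v0 = 0.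
  apply: Hfs => s; have [h1 h2] := Hi (kk s); split.
    move=> a' Aa'; have := supp_le_pt (p := fun v => a' v + ys (kk s) v) h1.
    by apply; exists a'.
  move=> b' Bb'; have := supp_le_pt (p := fun v => - xs (kk s) v - b' v) h2.
  by apply; exists b'.
have pz : p v0 = 0.
  rewrite pe'; apply: big1 => s _.
  by case: (HWf s) => _ _ ->; rewrite e0 mulr0.
have pn : p v0 < 0.
  rewrite pe /=.
  have E1 : \sum_t c t * e t v0 = \sum_t c t * (alg t v0 + zs (jj t) v0).
    transitivity (\sum_t c t * alg t v0 + \sum_t c t * beg t v0).
      rewrite -big_split; apply: eq_bigr => t _ /=.
      by case: (HWg t) => _ _ _ ->; rewrite mulrDr.
    rewrite (@regroup R n l jj c (fun t => beg t v0) (fun j => zs j v0)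
      (fun j => (Hzs j).2 v0)).
    by rewrite -big_split; apply: eq_bigr => t _; rewrite mulrDr.
  rewrite E1; apply: neg_comb => // t.
  have Jt : Jact (jj t) by case: (HWg t).
  have := supp_lt_pt (p := fun v => alg t v + zs (jj t) v) (Hj _ Jt).
  by apply; exists (alg t) => //; case: (HWg t).
by move: pn; rewrite pz ltxx.
Qed.

End Main3.


Lemma qd_good (R : realType) (X : normedModType R) (f : X -> R) (x : X)
  (A B : set (X -> R)) : is_quasidiff f x A B -> goodQD A B.
Proof.
case=> d1 c1 k1 H; have [dd [_ [a [b [[[p Ap _] _] [[q Bq _] _] _]]]]] := H 0.
by split => //; split; [exists p | exists q].
Qed.

Theorem proposition2 (R : realType) (X : completeNormedModType R) (m l : nat)
  (f : 'I_m -> X -> R) (g : 'I_l -> X -> R)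
  (Dlf Duf : 'I_m -> set (X -> R)) (Dlg Dug : 'I_l -> set (X -> R))
  (xbar : X) :
  let M := [set x : X | (forall i, f i x = 0) /\ (forall j, g j x <= 0)] in
  let Jact := [set j : 'I_l | g j xbar = 0] in
  M xbar ->
  (forall i, is_quasidiff (f i) xbar (Dlf i) (Duf i)) ->
  (forall j, Jact j -> is_quasidiff (g j) xbar (Dlg j) (Dug j)) ->
  [/\ (condA Dlf Duf -> condB Dlf Duf Dlg Dug Jact ->
         condQ_all Dlf Duf Dlg Dug Jact),
      ((forall i, wstar_closure (span_A Dlf Duf i) = span_A Dlf Duf i) ->
       wstar_closure (span_B Dlf Duf) = span_B Dlf Duf ->
       condQ_all Dlf Duf Dlg Dug Jact ->
       condA Dlf Duf /\ condB Dlf Duf Dlg Dug Jact) &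
      ((forall i, wstar_closure (span_A Dlf Duf i) = span_A Dlf Duf i) ->
       (condA Dlf Duf /\ condB Dlf Duf Dlg Dug Jact <->
        MFCQ_qd Dlf Duf Dlg Dug Jact))].
Proof.
move=> M Jact _ Hqf Hqg.
have Hf : forall i, goodQD (Dlf i) (Duf i) by move=> i; exact: qd_good (Hqf i).
have Hg : forall j, Jact j -> goodQD (Dlg j) (Dug j).
  by move=> j Jj; exact: qd_good (Hqg j Jj).
split.
- exact: (partA Hf Hg).
- move=> Hcl HclB HQ; split; first exact: (partB_A Hf Hg Hcl HQ).
  exact: (partB_B Hf Hg HclB HQ).
- exact: (partC Hf Hg).
Qed.
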